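(* Let $(\Xi,d_\Xi)$ be a metric space, let $\{P^\nu\}_{\nu\in\mathbb{N}}$ be probabilities on $(\Xi,\mathcal{B}(\Xi))$ converging weakly to a probability $P$, and let $\{h^\nu\}_{\nu\in\mathbb{N}}$ be measurable $\overline{\mathbb{R}}$-valued functions on $\Xi$ such that $$\liminf_{K\to+\infty}\ \liminf_{\nu\to+\infty}\mathbb{E}^{P^\nu}\big[h^\nu(\xi)\,\mathbb{1}\{\xi:h^\nu(\xi)\le -K\}\big]=0.$$ Then either $\liminf_{\nu\to+\infty}\mathbb{E}^{P^\nu}[h^\nu(\xi)]=+\infty$ or $$\mathbb{E}^{P}\Big[\Big(\liminf_{(\nu,\zeta)\to(+\infty,\xi)}h^\nu(\zeta)\Big)_+\Big]<+\infty.$$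
   Context: $\overline{\mathbb{R}}=\mathbb{R}\cup\{-\infty,+\infty\}$; $a_+=\max\{a,0\}$, $a_-=-\min\{a,0\}$. Weak convergence means $\int\varphi\,dP^\nu\to\int\varphi\,dP$ for all bounded continuous $\varphi$. For a probability $\mu$ and measurable $\overline{\mathbb{R}}$-valued $g$, $\mathbb{E}^\mu[g]:=\int g_+\,d\mu-\int g_-\,d\mu$ with conventions $+\infty-\alpha=+\infty$ for all $\alpha\in\overline{\mathbb{R}}$ and $\beta-(+\infty)=-\infty$ for $\beta\in\mathbb{R}$. $\mathbb{1}\{B\}$ is the indicator of $B$. $\liminf_{(\nu,\zeta)\to(+\infty,\xi)}h^\nu(\zeta):=\lim_{\delta\downarrow0}\lim_{N\to\infty}\inf\{h^\nu(\zeta):\nu\ge N,\ d_\Xi(\zeta,\xi)<\delta\}$. *)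

(* Defs.v *)
From HB Require Import structures.
From mathcomp Require Import all_boot all_order all_algebra.
From mathcomp Require Import all_classical all_reals all_analysis measurable_realfun.
Set Implicit Arguments. Unset Strict Implicit. Unset Printing Implicit Defensive.
Import Order.TTheory GRing.Theory Num.Theory.
Local Open Scope classical_set_scope.
Local Open Scope ring_scope.

Section Defs.
Context {R : realType} {T : pointedType}.

Definition is_metric (d : T -> T -> R) : Prop :=
  [/\ forall x y, 0 <= d x y,
      forall x y, d x y = 0 <-> x = y,
      forall x y, d x y = d y x &
      forall x y z, d x z <= d x y + d y z].

Definition dopen (d : T -> T -> R) : set (set T) :=
  [set A | forall x, A x -> exists2 e : R, 0 < e & forall y, d x y < e -> A y].

Definition dcontinuous (d : T -> T -> R) (f : T -> R) : Prop :=
  forall x (e : R), 0 < e ->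
    exists2 del : R, 0 < del & forall y, d x y < del -> `|f x - f y| < e.

Definition bounded_fun (f : T -> R) : Prop := exists M : R, forall x, `|f x| <= M.
End Defs.

Notation borel d := (g_sigma_algebraType (dopen d)).

Section Defs2.
Context {R : realType} {T : pointedType} (d : T -> T -> R).
Local Open Scope ereal_scope.

Definition weak_cvg (Pn : nat -> probability (borel d) R)
    (P : probability (borel d) R) : Prop :=
  forall phi : borel d -> R, dcontinuous d phi -> bounded_fun phi ->
    (fun n => \int[Pn n]_x (phi x)%:E) @ \oo --> \int[P]_x (phi x)%:E.

(* E^mu[g] := int g_+ - int g_-, with +oo - a = +oo for every a *)
Definition Eexp (mu : probability (borel d) R) (g : borel d -> \bar R) : \bar R :=
  let a := \int[mu]_x g^\+ x in
  let b := \int[mu]_x g^\- x in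
  if a == +oo then +oo else a - b.

Definition liminf_pinfty (f : R -> \bar R) : \bar R :=
  ereal_sup [set ereal_inf [set f K | K in [set K | (M <= K)%R]] | M in [set: R]].

(* epi-liminf: liminf_{(nu,zeta) -> (+oo,xi)} h^nu(zeta)
   = lim_{delta \downarrow 0} lim_{N -> oo} inf {h^nu zeta : nu >= N, d zeta xi < delta};
   both limits are monotone limits, written as suprema. *)
Definition epi_liminf (h : nat -> T -> \bar R) (xi : T) : \bar R :=
  ereal_sup [set
    ereal_sup [set ereal_inf [set v | exists nu : nat, exists zeta : T,
                         [/\ (N <= nu)%N, (d zeta xi < delta)%R & h nu zeta = v]]
              | N in [set: nat]]
  | delta in [set delta : R | (0 < delta)%R]].
End Defs2.

(* Main.v *)
Require Import Defs.
From HB Require Import structures.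
From mathcomp Require Import all_boot all_order all_algebra.
From mathcomp Require Import all_classical all_reals all_analysis measurable_realfun.
From mathcomp Require Import lra.
Import Order.TTheory GRing.Theory Num.Theory.
Local Open Scope classical_set_scope.
Local Open Scope ring_scope.
Local Open Scope ereal_scope.

Lemma limn_einf_sup (R : realType) (u : (\bar R)^nat) :
  limn_einf u = ereal_sup (range (einfs u)).
Proof.
rewrite limn_einf_lim; apply/cvg_lim => //; exact: cvg_einfs_sup.
Qed.

Section Helpers.
Context (R : realType) (T : pointedType) (d : T -> T -> R).

Lemma dcont_measurable (f : borel d -> R) : dcontinuous d f -> measurable_fun setT f.
Proof.
move=> cf; apply: (measurability _ (RGenOInfty.measurableE R)) => //.
move=> /= _ [_ [x ->] <-]; apply: sub_sigma_algebra => y [_ /=].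
rewrite in_itv/= andbT => xfy.
have [del del0 H] := cf y (f y - x)%R ltac:(by rewrite subr_gt0).
exists del => // z dz; split => //=; rewrite in_itv/= andbT.
have := H z dz; rewrite ltr_norml => /andP[_ ?]; lra.
Qed.

Lemma integral_le_nm (mu : probability (borel d) R) (f g : borel d -> \bar R) :
  (forall x, 0 <= f x) -> (forall x, f x <= g x) ->
  \int[mu]_x f x <= \int[mu]_x g x.
Proof.
move=> f0 fg; rewrite !ge0_integralTE //; last by move=> x; exact: le_trans (f0 x) (fg x).
apply: ereal_sup_le => _ [s hs <-]; exists s => //= x; exact: le_trans (hs x) (fg x).
Qed.

Lemma ereal_le_real (a b : \bar R) :
  (forall t : R, t%:E < a -> t%:E <= b) -> a <= b.
Proof.
case: a => [r| |] H; last by rewrite leNye.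
- case: b H => [s| |] H; [| by rewrite leey | ].
  + rewrite lee_fin leNgt; apply/negP => sr.
    have := H ((s + r) / 2)%R; rewrite !lte_fin lee_fin => /(_ ltac:(lra)); lra.
  + by have := H (r - 1)%R; rewrite lte_fin => /(_ ltac:(lra)).
- case: b H => [s| |] H; [| by rewrite leey | ].
  + by exfalso; have := H (s + 1)%R (ltey _); rewrite lee_fin; lra.
  + by have := H 0%R (ltey _).
Qed.


Definition Phi (h : nat -> T -> \bar R) (m : nat) (x : T) : \bar R :=
  ereal_inf [set v | exists k, exists y, (m <= k)%N /\
     v = Order.min ((h k)^\+ y) (m%:R)%:E + ((m.+1)%:R * d x y)%:E].

Hypothesis d0 : forall x y, (0 <= d x y)%R.
Hypothesis dxx : forall x, d x x = 0%R.
Hypothesis dsym : forall x y, d x y = d y x.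
Hypothesis dtri : forall x y z, (d x z <= d x y + d y z)%R.

Variable h : nat -> T -> \bar R.

Lemma Phi_ge0 m x : 0 <= Phi h m x.
Proof.
apply: le_ereal_inf_tmp => _ [k [y [_ ->]]].
apply: adde_ge0; first by rewrite le_min funepos_ge0 lee_fin ler0n.
by rewrite lee_fin mulr_ge0.
Qed.

Lemma Phi_le_h m k x : (m <= k)%N -> Phi h m x <= (h k)^\+ x.
Proof.
move=> mk; apply: ge_ereal_inf; eexists; first by exists k, x; split.
by rewrite dxx mulr0 adde0 ge_min lexx.
Qed.

Lemma Phi_le_m m x : Phi h m x <= (m%:R)%:E.
Proof.
apply: ge_ereal_inf; eexists; first by exists m, x; split.
by rewrite dxx mulr0 adde0 ge_min lexx orbT.
Qed.

Lemma Phi_fin m x : Phi h m x \is a fin_num.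
Proof. by rewrite ge0_fin_numE ?Phi_ge0 // (le_lt_trans (Phi_le_m _ _)) ?ltey. Qed.

Lemma Phi_lip m x y : Phi h m x <= Phi h m y + ((m.+1)%:R * d x y)%:E.
Proof.
rewrite -leeBlDr //; apply: le_ereal_inf_tmp => _ [k [z [mk ->]]].
rewrite leeBlDr //; apply: ge_ereal_inf; eexists; first by exists k, z; split.
rewrite -addeA -EFinD leeD2l // lee_fin -mulrDr ler_wpM2l //.
by rewrite addrC dtri.
Qed.

Lemma Phi_nd x : nondecreasing_seq (Phi h ^~ x).
Proof.
move=> m m' mm'; apply: le_ereal_inf_tmp => _ [k [z [mk ->]]].
apply: ge_ereal_inf; eexists; first by exists k, z; split => //; exact: leq_trans mk.
apply: leeD; first by apply: le_min2 => //; rewrite lee_fin ler_nat.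
by rewrite lee_fin ler_wpM2r // ler_nat.
Qed.


Lemma epi_le_Phi x : epi_liminf d h x <= ereal_sup (range (Phi h ^~ x)).
Proof.
have S0 : 0 <= ereal_sup (range (Phi h ^~ x)).
  by apply: le_trans (Phi_ge0 0 x) _; apply: ereal_sup_ubound; exists 0%N.
apply: ge_ereal_sup => _ [del del0 <-]; apply: ge_ereal_sup => _ [N _ <-].
apply: ereal_le_real => t tI.
have [t0|t0] := leP t 0%R; first by apply: le_trans S0; rewrite lee_fin.
pose m := maxn N (maxn (Num.truncn t).+1 (Num.truncn (t / del)).+1).
have Nm : (N <= m)%N by rewrite leq_maxl.
have tm : (t < m%:R)%R.
  have h2 : ((Num.truncn t).+1%:R <= m%:R :> R)%R.
    by rewrite ler_nat /m (leq_trans _ (leq_maxr _ _)) // leq_maxl.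
  exact: lt_le_trans (truncnS_gt t) h2.
have tdm : (t < m%:R * del)%R.
  have h2 : ((Num.truncn (t / del)).+1%:R <= m%:R :> R)%R.
    by rewrite ler_nat /m (leq_trans _ (leq_maxr _ _)) // leq_maxr.
  rewrite -ltr_pdivrMr //; exact: lt_le_trans (truncnS_gt _) h2.
apply: le_trans (ereal_sup_ubound _) ; last by exists m.
apply: le_ereal_inf_tmp => _ [k [y [mk ->]]].
have minge0 : 0 <= Order.min ((h k)^\+ y) (m%:R)%:E.
  by rewrite le_min funepos_ge0 lee_fin ler0n.
have [dyx|dyx] := ltP (d y x) del.
- have : t%:E < h k y.
    apply: lt_le_trans tI _; apply: ereal_inf_lbound.
    by exists k, y; split => //; exact: leq_trans mk.
  move=> tk; rewrite -[t%:E]adde0; apply: leeD; last by rewrite lee_fin mulr_ge0.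
  rewrite le_min lee_fin (ltW tm) andbT; apply: (le_trans (ltW tk)).
  by rewrite funeposE le_max lexx.
- rewrite -[t%:E]add0e; apply: leeD => //; rewrite lee_fin.
  apply: (le_trans (ltW tdm)); rewrite dsym; apply: ler_pM => //.
  exact: ltW. by rewrite ler_nat.
Qed.


Lemma Phi_dcont m : dcontinuous d (fun x => fine (Phi h m x)).
Proof.
move=> x e e0; exists (e / m.+1%:R)%R; first by rewrite divr_gt0.
move=> y dxy.
have H1 := Phi_lip m x y; have H2 := Phi_lip m y x.
rewrite -(fineK (Phi_fin m x)) -(fineK (Phi_fin m y)) -EFinD lee_fin in H1 H2.
rewrite dsym -EFinD lee_fin in H2.
have : (m.+1%:R * d x y < e)%R by rewrite mulrC -ltr_pdivlMr.
rewrite ltr_norml => ?; apply/andP; split; lra.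
Qed.

Lemma Phi_bounded m : Defs.bounded_fun (fun x => fine (Phi h m x)).
Proof.
exists m%:R => x; rewrite ger0_norm; last by rewrite fine_ge0 // Phi_ge0.
by rewrite -lee_fin fineK ?Phi_fin // Phi_le_m.
Qed.

End Helpers.

Theorem lemma3p5 (R : realType) (T : pointedType) (d : T -> T -> R)
  (Pn : nat -> probability (borel d) R) (P : probability (borel d) R)
  (h : nat -> borel d -> \bar R) :
  is_metric d ->
  weak_cvg Pn P ->
  (forall n, measurable_fun [set: borel d] (h n)) ->
  liminf_pinfty (fun K : R => limn_einf (fun n =>
     Eexp (Pn n) (fun x => h n x * (\1_[set y | (h n y <= (- K)%:E)%E] x)%:E))) = 0 ->
  limn_einf (fun n => Eexp (Pn n) (h n)) = +oo \/
  Eexp P (epi_liminf d h)^\+ < +oo.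
Proof.
move=> [d0 d0iff dsym dtri] hw hm hK.
have dxx : forall x, d x x = 0%R by move=> x; apply/d0iff.
have [K [K0 [N0 HN0]]] : exists K : R, (0 <= K)%R /\ exists N0, forall n, (N0 <= n)%N ->
    \int[Pn n]_x (h n)^\- x <= (K + 1)%:E.
  move: hK; rewrite /liminf_pinfty; set S := ereal_sup _ => hK.
  have : (-1)%:E < S by rewrite hK lte_fin ltrN10.
  case/ereal_sup_gt => _ [M _ <-] HM.
  pose K := Num.max M 0%R.
  have : (-1)%:E < limn_einf (fun n => Eexp (Pn n)
       (fun x => h n x * (\1_[set y | (h n y <= (- K)%:E)%E] x)%:E)).
    apply: (lt_le_trans HM); apply: ereal_inf_lbound; exists K => //=.
    by rewrite /K le_max lexx.
  rewrite limn_einf_sup.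
  case/ereal_sup_gt => _ [N0 _ <-] HN.
  exists K; split; first by rewrite /K le_max lexx orbT.
  exists N0 => n Nn.
  set g := fun x => h n x * (\1_[set y | (h n y <= (- K)%:E)%E] x)%:E.
  have : (-1)%:E < Eexp (Pn n) g.
    apply: (lt_le_trans HN); apply: ereal_inf_lbound; exists n => //.
  have gE x : g x = if h n x <= (- K)%:E then h n x else 0.
    rewrite /g indicE /=; case: ifPn => hx.
      by rewrite mem_set // mule1.
    rewrite memNset //= ?mule0 //; exact/negP.
  have K0 : (0 <= K)%R by rewrite /K le_max lexx orbT.
  have g0 x : g x <= 0.
    rewrite gE; case: ifPn => // hx; apply: (le_trans hx).
    by rewrite lee_fin oppr_le0.
  have gpos : g^\+ = cst 0.
    by apply/funext => x; rewrite funeposE; apply/max_idPr.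
  rewrite /Eexp; cbv zeta; rewrite gpos integral0.
  have -> : ((0 : \bar R) == +oo) = false by [].
  rewrite sub0e EFinN lteN2 => gneg.
  have mg : measurable_fun setT g.
    apply: emeasurable_funM => //; apply/measurable_EFinP.
    apply: measurable_indic.
    have := emeasurable_fun_infty_c measurableT (hm n) (- K)%:E.
    by rewrite setTI.
  apply: (@le_trans _ _ (\int[Pn n]_x ((cst K%:E) x + g^\- x))).
    apply: ge0_le_integral => //.
    - exact: measurable_funeneg.
    - by apply: emeasurable_funD => //; exact: measurable_funeneg.
    - move=> x _; rewrite /= !funenegE gE; case: ifPn => hx.
        by rewrite leeDr // lee_fin.
      rewrite oppe0 maxxx adde0 ge_max lee_fin K0 andbT.
      by rewrite leeNl; rewrite -ltNge in hx; exact: ltW.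
  rewrite ge0_integralD //; last exact: measurable_funeneg.
  rewrite integral_cst //.
  have P1 : (Pn n : {measure set borel d -> \bar R}) setT = 1 := probability_setT _.
  rewrite P1 mule1 EFinD leeD2l //; exact: ltW.
set u := fun n => Eexp (Pn n) (h n).
have [hl|hl] := eqVneq (limn_einf u) +oo; first by left.
right.
have [B HB] : exists B : R, forall N, exists2 n, (N <= n)%N & u n < B%:E.
  have hle N : einfs u N <= limn_einf u.
    by rewrite limn_einf_sup; apply: ereal_sup_ubound; exists N.
  suff [B lB] : exists B : R, limn_einf u < B%:E.
    exists B => N; have := le_lt_trans (hle N) lB.
    by case/ereal_inf_lt => _ [n Nn <-] unB; exists n.
  move: hl; case: (limn_einf u) => [r| |] hl.
  - by exists (r + 1)%R; rewrite lte_fin; lra.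
  - by rewrite eqxx in hl.
  - by exists 0%R; exact: ltNyr.
pose D := (B + (K + 1))%R.
have HD : forall m, exists2 k, (m <= k)%N & \int[Pn k]_x (h k)^\+ x <= D%:E.
  move=> m; have [n Nn unB] := HB (maxn m N0).
  exists n; first exact: leq_trans (leq_maxl _ _) Nn.
  have hneg := HN0 n (leq_trans (leq_maxr _ _) Nn).
  move: unB; rewrite /u /Eexp; cbv zeta; case: ifPn => [/eqP ->|_].
    by rewrite ltNge leey.
  have q0 : 0 <= \int[Pn n]_x (h n)^\- x.
    by apply: integral_ge0 => x _; exact: funeneg_ge0.
  have qfin : \int[Pn n]_x (h n)^\- x \is a fin_num.
    by rewrite ge0_fin_numE // (le_lt_trans hneg) ?ltey.
  rewrite lteBlDr // => unB; apply: ltW; apply: (lt_le_trans unB).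
  by rewrite /D EFinD leeD2l.
pose g' := fun m (x : borel d) => (fine (Phi R T d h m x))%:E.
have g'E m x : g' m x = Phi R T d h m x by rewrite /g' fineK // Phi_fin.
have g'0 m x : 0 <= g' m x by rewrite g'E Phi_ge0.
have mg' m : measurable_fun setT (g' m).
  apply/measurable_EFinP; apply: dcont_measurable; exact: Phi_dcont.
have nd_g' x : nondecreasing_seq (g'^~ x).
  by move=> m1 m2 m12; rewrite !g'E; exact: Phi_nd.
have HPm m : \int[P]_x g' m x <= D%:E.
  have cvgP := hw _ (@Phi_dcont R T d d0 dxx dsym dtri h m) (@Phi_bounded R T d d0 dxx h m).
  rewrite -(cvg_lim _ cvgP) // -is_cvg_limn_einfE; last first.
    by apply/cvg_ex; eexists; exact: cvgP.
  rewrite limn_einf_lim; apply: lime_le; first exact: is_cvg_einfs.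
  apply: nearW => N; have [k Nk HkD] := HD (maxn N m).
  apply: ge_ereal_inf; eexists; first by exists k => //; exact: leq_trans (leq_maxl _ _) Nk.
  apply: le_trans HkD; apply: integral_le_nm => x; rewrite -/(g' m x) g'E.
    exact: Phi_ge0.
  by apply: Phi_le_h => //; exact: leq_trans (leq_maxr _ _) Nk.
have MCT := monotone_convergence P measurableT mg' (fun m x _ => g'0 m x)
  (fun x _ => nd_g' x).
have Hpos : \int[P]_x ((epi_liminf d h)^\+)^\+ x <= D%:E.
  apply: (le_trans (@integral_le_nm R T d P _ (fun x => limn (g'^~ x)) _ _)).
  - by move=> x; exact: funepos_ge0.
  - move=> x; rewrite (funeposE (epi_liminf d h)^\+) (max_idPl (funepos_ge0 _ _)).
    have -> : g'^~ x = Phi R T d h ^~ x by apply/funext => m; exact: g'E.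
    rewrite (cvg_lim _ (ereal_nondecreasing_cvgn _)) //; last exact: Phi_nd.
    rewrite funeposE ge_max; apply/andP; split; first exact: epi_le_Phi.
    by apply: le_trans (@Phi_ge0 R T d d0 h 0 x) _; apply: ereal_sup_ubound; exists 0%N.
  rewrite MCT.
  rewrite (cvg_lim _ (ereal_nondecreasing_cvgn _)) //.
    by apply: ge_ereal_sup => _ [m _ <-]; exact: HPm.
  move=> m1 m2 m12; apply: ge0_le_integral => //.
  by move=> x _; exact: nd_g'.
rewrite /Eexp; cbv zeta; case: ifPn => [/eqP Hoo|_].
  by rewrite Hoo leNgt ltey in Hpos.
have -> : (fun x => ((epi_liminf d h)^\+)^\- x) = cst 0.
  by apply/funext => x; rewrite funenegE; apply/max_idPr; rewrite leeNl oppe0 funepos_ge0.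
rewrite integral0 sube0; exact: le_lt_trans Hpos (ltey _).
Qed.
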